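(* Let $\eta(y)=\sum_{k=0}^\infty M_k y^{(k)}$ be a finite order differential operator on $\mathcal{P}_c$ (i.e. $M_k\equiv 0$ for all $k>r$ for some $r\in\mathbb{N}$), let $p=(p_n)_{n\in\mathbb{N}_0}$ be a polynomial sequence and $d\in\widetilde{D}$ with $\eta p_n=d_np_n$ for all $n\in\mathbb{N}_0$. Let $d'\in\widetilde{D}$ with $d'\neq d$ and $d'_k=d_k$ for all but finitely many $k$. Then any formal differential operator $\widetilde{\eta}$ with $\widetilde{\eta}p_n=d'_np_n$ for all $n\in\mathbb{N}_0$ is of infinite order, i.e. it is not a finite order differential operator.
   Context: $\mathcal{P}_c$ is the space of polynomials in one real variable with complex coefficients. A formal differential operator is a map $\mathcal{P}_c\to\mathcal{P}_c$, $y\mapsto\sum_{k=0}^\infty M_k y^{(k)}$ (a finite sum on each polynomial), where $M_k$ are complex polynomials with $\deg M_k\le k$ and $M_0$ constant. A polynomial sequence (PS) is $p=(p_n)_{n\in\mathbb{N}_0}$ with $p_0\equiv1$ and $\deg p_n=n$. $\widetilde{D}$ is the set of non-constant sequences $(d_n)_{n\in\mathbb{N}_0}$ of non-zero complex numbers. *)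

(* Defs.v *)
From HB Require Import structures.
From mathcomp Require Import all_boot all_order all_algebra.
From mathcomp Require Import reals.
From mathcomp.real_closed Require Import complex.
Set Implicit Arguments. Unset Strict Implicit. Unset Printing Implicit Defensive.
Import Order.TTheory GRing.Theory Num.Theory.
Local Open Scope ring_scope.

Section Defs.
Variable C : fieldType.

(* A formal differential operator is given by its coefficient sequence
   M : nat -> {poly C}, with deg M_k <= k (i.e. size (M k) <= k+1; the zero
   polynomial is allowed) and M_0 constant (automatic from deg M_0 <= 0). *)
Definition is_fdo (M : nat -> {poly C}) : Prop :=
  forall k, (size (M k) <= k.+1)%N.

(* Action y |-> sum_k M_k y^(k); the sum is finite since y^(k) = 0 for k >= size y. *)
Definition fdo_apply (M : nat -> {poly C}) (y : {poly C}) : {poly C} :=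
  \sum_(k < size y) M k * y^`(k).

Definition finite_order (M : nat -> {poly C}) : Prop :=
  exists r : nat, forall k, (r < k)%N -> M k = 0.

Definition is_PS (p : nat -> {poly C}) : Prop :=
  p 0%N = 1 /\ forall n, size (p n) = n.+1.

Definition in_Dtilde (d : nat -> C) : Prop :=
  (forall n, d n != 0) /\ exists m n, d m != d n.
End Defs.

(* Main.v *)
Require Import Defs.
From HB Require Import structures.
From mathcomp Require Import all_boot all_order all_algebra.
From mathcomp Require Import reals.
From mathcomp.real_closed Require Import complex.
From Stdlib Require Import Classical.
From mathcomp Require Import zify.
Import Order.TTheory GRing.Theory Num.Theory.
Local Open Scope ring_scope.

Section Gen.
Variable C : numFieldType.

Lemma sum_ext (V : nmodType) (f : nat -> V) a b : (a <= b)%N ->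
  (forall k, (a <= k)%N -> f k = 0) -> \sum_(k < b) f k = \sum_(k < a) f k.
Proof.
move=> hab H; rewrite -!(big_mkord xpredT f) (@big_cat_nat _ _ _ a 0 b _ _ (leq0n a) hab) /=.
rewrite [in X in _ + X = _]big_nat_cond [X in _ + X = _]big1 ?addr0 //.
move=> k /andP[/andP[ha _] _]; exact: H.
Qed.

Lemma fdoB (D : nat -> {poly C}) (y : {poly C}) B : (size y <= B)%N ->
  fdo_apply D y = \sum_(k < B) D k * y^`(k).
Proof.
move=> h; rewrite /fdo_apply (sum_ext _ (fun k => D k * y^`(k)) _ _ h) // => k hk.
by rewrite derivn_poly0 ?mulr0 // (leq_trans h).
Qed.

Lemma fdo_lin (D : nat -> {poly C}) (y : {poly C}) :
  fdo_apply D y = \sum_(i < size y) y`_i *: fdo_apply D 'X^i.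
Proof.
set n := size y.
have Hy : y = \sum_(i < n) y`_i *: 'X^i by rewrite -poly_def coefK.
rewrite {1}/fdo_apply -/n.
have Hd : forall k, y^`(k) = \sum_(i < n) y`_i *: ('X^i)^`(k).
  move=> k; rewrite {1}Hy raddf_sum; apply: eq_bigr => i _; exact: derivnZ.
under eq_bigr => k _ do rewrite Hd mulr_sumr.
rewrite exchange_big /=; apply: eq_bigr => i _.
rewrite (@fdoB D _ n) ?size_polyXn // scaler_sumr.
by apply: eq_bigr => k _; rewrite scalerAr.
Qed.

Definition ff (k : nat) : {poly C} := \prod_(j < k) ('X - (j%:R)%:P).

Lemma ff_eval k m : (ff k).[m%:R] = (m ^_ k)%:R.
Proof.
elim: k => [|k IH]; first by rewrite /ff big_ord0 hornerC ffactn0.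
rewrite /ff big_ord_recr /= hornerM -/(ff k) IH hornerXsubC ffactnSr natrM.
case: (leqP k m) => h; first by rewrite natrB.
by rewrite ffact_small // !mul0r.
Qed.

Variable D : nat -> {poly C}.
Variable r : nat.
Hypothesis HD : is_fdo D.
Hypothesis Hr : forall k, (r < k)%N -> D k = 0.

Definition Q s : {poly C} :=
  \sum_(k < r.+1) (if (s <= k)%N then (D k)`_(k - s) else 0) *: ff k.

Lemma coefXm m i : (fdo_apply D 'X^m)`_i =
  \sum_(k < m.+1) (m ^_ k)%:R * (if (i < m - k)%N then 0 else (D k)`_(i - (m - k))).
Proof.
rewrite /fdo_apply size_polyXn coef_sum; apply: eq_bigr => k _.
by rewrite derivnXn mulrnAr coefMn coefMXn mulr_natl.
Qed.

Lemma Q_eval s m : (Q s).[m%:R] =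
  \sum_(k < r.+1) (m ^_ k)%:R * (if (s <= k)%N then (D k)`_(k - s) else 0).
Proof.
rewrite /Q horner_sum; apply: eq_bigr => k _.
by rewrite hornerZ ff_eval mulrC.
Qed.

Lemma coefX_le m i : (i <= m)%N -> (fdo_apply D 'X^m)`_i = (Q (m - i)).[m%:R].
Proof.
move=> him; rewrite coefXm Q_eval.
have h1 : (m.+1 <= (m + r).+1)%N by lia.
have h2 : (r.+1 <= (m + r).+1)%N by lia.
rewrite -(sum_ext _ (fun k => (m ^_ k)%:R * (if (i < m - k)%N then 0 else (D k)`_(i - (m - k)))) _ _ h1).
rewrite -(sum_ext _ (fun k => (m ^_ k)%:R * (if (m - i <= k)%N then (D k)`_(k - (m - i)) else 0)) _ _ h2).
- apply: eq_bigr => k _.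
  case: (leqP k m) => hk; last by rewrite ffact_small // !mul0r.
  case: ifP => h3; case: ifP => h4 //; try lia.
  congr (_ * _); congr (_`_ _); lia.
- move=> k hk; rewrite Hr ?coef0; last lia.
  by case: ifP => _; rewrite mulr0.
- by move=> k hk; rewrite ffact_small ?mul0r //.
Qed.

Lemma coefX_gt m i : (m < i)%N -> (fdo_apply D 'X^m)`_i = 0.
Proof.
move=> hmi; rewrite coefXm big1 // => k _.
case: ifP => h; first by rewrite mulr0.
case: (leqP k m) => hk; last by rewrite ffact_small // mul0r.
rewrite nth_default ?mulr0 //; apply: leq_trans (HD k) _; lia.
Qed.

Lemma Lzero t : (forall s, (s < t)%N -> Q s = 0) ->
  forall m i, (m < i + t)%N -> (fdo_apply D 'X^m)`_i = 0.
Proof.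
move=> H m i hm; case: (leqP i m) => h; last exact: coefX_gt.
by rewrite coefX_le // H ?horner0 //; lia.
Qed.

Lemma nonroot L (q : {poly C}) : q != 0 -> exists n, (L <= n)%N /\ q.[n%:R] != 0.
Proof.
move=> q0; apply: NNPP => Hn.
set rs := map (fun n : nat => n%:R : C) (iota L (size q)).
have H1 : all (root q) rs.
  apply/allP => x /mapP[n]; rewrite mem_iota => /andP[hn _] ->.
  apply/eqP; apply: NNPP => hne; apply: Hn; exists n; split => //; exact/eqP.
have H2 : uniq rs.
  by rewrite map_inj_uniq ?iota_uniq // => a b /eqP; rewrite eqr_nat => /eqP.
by have := max_poly_roots q0 H1 H2; rewrite size_map size_iota ltnn.
Qed.

Lemma main (p : nat -> {poly C}) N k0 :
  (forall n, size (p n) = n.+1) ->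
  (forall n, (N <= n)%N -> fdo_apply D (p n) = 0) ->
  fdo_apply D (p k0) != 0 -> False.
Proof.
move=> Hs HN Hk0.
case: (classic (exists s, Q s != 0)) => [Hex|Hall].
- have [s0 Hs0 Hmin] := ex_minnP Hex.
  have Hlt : forall s, (s < s0)%N -> Q s = 0.
    move=> s hs; apply: NNPP => hne; have := Hmin s.
    by rewrite leqNgt hs; move/(_ (introN eqP hne)).
  have [n [hn hQ]] := nonroot (maxn N s0) _ Hs0.
  rewrite geq_max in hn; case/andP: hn => hN hs.
  have := congr1 (fun q : {poly C} => q`_(n - s0)) (HN n hN); rewrite /=.
  rewrite fdo_lin Hs coef_sum big_ord_recr /= big1 ?add0r.
  + rewrite coefZ coefX_le ?leq_subr // subKn // coef0 => /eqP.
    rewrite mulf_eq0 (negbTE hQ) orbF.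
    have : lead_coef (p n) != 0 by rewrite lead_coef_eq0 -size_poly_eq0 Hs.
    by rewrite lead_coefE Hs /= => /negbTE ->.
  + move=> i _; rewrite coefZ (@Lzero s0 Hlt) ?mulr0 //.
    have := ltn_ord i; lia.
- have H0 : forall m, fdo_apply D 'X^m = 0.
    move=> m; apply/polyP => i; rewrite coef0 (@Lzero m.+1) //; last lia.
    by move=> s _; apply: NNPP => hne; apply: Hall; exists s; exact/eqP.
  move: Hk0; rewrite fdo_lin big1 ?eqxx // => i _.
  by rewrite H0 scaler0.
Qed.
End Gen.

Theorem proposition2 (R : realType)
  (M : nat -> {poly R[i]}) (p : nat -> {poly R[i]}) (d d' : nat -> R[i]) :
  is_fdo M -> finite_order M ->
  is_PS p -> in_Dtilde d ->
  (forall n, fdo_apply M (p n) = d n *: p n) ->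
  in_Dtilde d' -> (exists k, d' k != d k) ->
  (exists N : nat, forall k, (N <= k)%N -> d' k = d k) ->
  forall M' : nat -> {poly R[i]}, is_fdo M' ->
    (forall n, fdo_apply M' (p n) = d' n *: p n) ->
    ~ finite_order M'.
Proof.
move=> HM [r1 Hr1] [_ Hs] _ HMp _ [k0 Hk0] [N HN] M' HM' HM'p [r2 Hr2].
pose D k := M' k - M k.
have HD : is_fdo D.
  move=> k; apply: leq_trans (size_polyD _ _) _; rewrite size_polyN geq_max.
  by rewrite HM HM'.
have Hr : forall k, (maxn r1 r2 < k)%N -> D k = 0.
  move=> k; rewrite gtn_max => /andP[h1 h2]; by rewrite /D Hr1 // Hr2 // subrr.
have HDp : forall n, fdo_apply D (p n) = (d' n - d n) *: p n.
  move=> n; rewrite scalerBl -HMp -HM'p /fdo_apply -sumrB.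
  by apply: eq_bigr => k _; rewrite /D mulrBl.
apply: (@main _ D _ HD Hr p N k0 Hs).
- by move=> n hn; rewrite HDp HN // subrr scale0r.
- rewrite HDp scaler_eq0 subr_eq0 (negbTE Hk0) /=.
  by rewrite -size_poly_eq0 Hs.
Qed.
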